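(* There exists $C(\tau_0)\in(0,\infty)$ such that for all $\tau\in(0,\tau_0)$ and all $x_1,x_2,x\in\mathbb R^2$: (1) $\langle x_2-x_1,\psi_\tau(x_2)-\psi_\tau(x_1)\rangle\le C(\tau_0)\|x_2-x_1\|^2$; (2) $\|\psi_\tau(x_2)-\psi_\tau(x_1)\|\le C(\tau_0)(1+\|x_1\|^3+\|x_2\|^3)\|x_2-x_1\|$; (3) $\|\psi_\tau(x)-F(x)\|\le C(\tau_0)\,\tau\,(1+\|x\|^5)$. Moreover $\sup_{\tau\in(0,\tau_0)}\|\psi_\tau(0)\|<\infty$.
   Context: $\langle\cdot,\cdot\rangle$, $\|\cdot\|$ are the Euclidean inner product and norm on $\mathbb R^2$. Fix real $\gamma_1,\gamma_2,\beta$, $B=\begin{pmatrix}0&-1\\ \gamma_1&-\gamma_2\end{pmatrix}$ and $F(u,v)=(u-u^3-v,\ \gamma_1u-\gamma_2v+\beta)$. For $t\ge0$, $\phi^{\rm NL}_t(u,v)=\big(u/\sqrt{u^2+(1-u^2)e^{-2t}},\ v+\beta t\big)$ and $\phi^{\rm L}_t(x)=e^{tB}x$. Fix $\tau_0>0$; for $\tau\in(0,\tau_0)$ let $\phi_\tau=\phi^{\rm L}_\tau\circ\phi^{\rm NL}_\tau$ and $\psi_\tau(x)=(\phi_\tau(x)-x)/\tau$. *)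

(* Defs.v *)
From Stdlib Require Import Reals Lra.
From Coquelicot Require Import Coquelicot.
Open Scope R_scope.

Definition vec := (R * R)%type.
Definition vadd (x y : vec) : vec := (fst x + fst y, snd x + snd y).
Definition vsub (x y : vec) : vec := (fst x - fst y, snd x - snd y).
Definition vscal (a : R) (x : vec) : vec := (a * fst x, a * snd x).
Definition inner (x y : vec) : R := fst x * fst y + snd x * snd y.
Definition vnorm (x : vec) : R := sqrt (inner x x).

Record mat2 := Mat2 { m11 : R; m12 : R; m21 : R; m22 : R }.
Definition mmul (A B : mat2) : mat2 :=
  Mat2 (m11 A * m11 B + m12 A * m21 B) (m11 A * m12 B + m12 A * m22 B)
       (m21 A * m11 B + m22 A * m21 B) (m21 A * m12 B + m22 A * m22 B).
Definition mid : mat2 := Mat2 1 0 0 1.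
Fixpoint mpow (A : mat2) (k : nat) : mat2 :=
  match k with O => mid | S k' => mmul A (mpow A k') end.
Definition mapply (A : mat2) (x : vec) : vec :=
  (m11 A * fst x + m12 A * snd x, m21 A * fst x + m22 A * snd x).

Definition mexp (t : R) (A : mat2) : mat2 :=
  Mat2 (Series (fun k => t ^ k / INR (Factorial.fact k) * m11 (mpow A k)))
       (Series (fun k => t ^ k / INR (Factorial.fact k) * m12 (mpow A k)))
       (Series (fun k => t ^ k / INR (Factorial.fact k) * m21 (mpow A k)))
       (Series (fun k => t ^ k / INR (Factorial.fact k) * m22 (mpow A k))).

Definition Bmat (g1 g2 : R) : mat2 := Mat2 0 (-1) g1 (- g2).

Definition Ffield (g1 g2 beta : R) (x : vec) : vec :=
  (fst x - fst x ^ 3 - snd x, g1 * fst x - g2 * snd x + beta).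

Definition phiNL (beta t : R) (x : vec) : vec :=
  (fst x / sqrt (fst x ^ 2 + (1 - fst x ^ 2) * exp (-2 * t)), snd x + beta * t).

Definition phiL (g1 g2 t : R) (x : vec) : vec := mapply (mexp t (Bmat g1 g2)) x.

Definition phi_tau (g1 g2 beta tau : R) (x : vec) : vec :=
  phiL g1 g2 tau (phiNL beta tau x).

Definition psi_tau (g1 g2 beta tau : R) (x : vec) : vec :=
  vscal (/ tau) (vsub (phi_tau g1 g2 beta tau x) x).

(* Main.v *)
Require Import Defs.
From Stdlib Require Import Reals Lra Psatz.
From Coquelicot Require Import Coquelicot.
Open Scope R_scope.

Lemma exp_series x : is_series (fun k => x^k / INR (Factorial.fact k)) (exp x).
Proof.
eapply is_series_ext; [|apply is_exp_Reals]. intros n. simpl.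
unfold scal; simpl. unfold mult; simpl. rewrite pow_n_pow. unfold Rdiv. ring.
Qed.

Lemma ab_le a b : Rabs a <= b -> 0 <= b. Proof. intros; generalize (Rabs_pos a); lra. Qed.

Lemma mpow_bound A M : Rabs (m11 A) <= M -> Rabs (m12 A) <= M -> Rabs (m21 A) <= M -> Rabs (m22 A) <= M ->
  forall k, Rabs (m11 (mpow A k)) <= (2*M+1)^k /\ Rabs (m12 (mpow A k)) <= (2*M+1)^k /\
            Rabs (m21 (mpow A k)) <= (2*M+1)^k /\ Rabs (m22 (mpow A k)) <= (2*M+1)^k.
Proof.
intros H1 H2 H3 H4. assert (HM := ab_le _ _ H1).
induction k as [|k [I1 [I2 [I3 I4]]]].
- simpl. rewrite Rabs_R1, Rabs_R0. lra.
- assert (HL : 0 <= (2*M+1)^k) by (apply pow_le; lra).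
  assert (G : forall a b c d, Rabs a <= M -> Rabs b <= (2*M+1)^k -> Rabs c <= M -> Rabs d <= (2*M+1)^k ->
     Rabs (a*b + c*d) <= (2*M+1)^(S k)).
  { intros a b c d Ha Hb Hc Hd. eapply Rle_trans. apply Rabs_triang. rewrite !Rabs_mult.
    assert (Rabs a * Rabs b <= M * (2*M+1)^k) by (apply Rmult_le_compat; try apply Rabs_pos; lra).
    assert (Rabs c * Rabs d <= M * (2*M+1)^k) by (apply Rmult_le_compat; try apply Rabs_pos; lra).
    simpl. nra. }
  simpl. repeat split; apply G; assumption.
Qed.

Lemma fact_ratio k : / INR (Factorial.fact (S (S k))) <= / INR (Factorial.fact k).
Proof.
apply Rinv_le_contravar. apply lt_0_INR, Factorial.lt_O_fact.
apply le_INR, Factorial.fact_le. lia.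
Qed.

Lemma series_rem (c : nat -> R) t L : 0 <= t -> 0 <= L -> (forall k, Rabs (c k) <= L^k) ->
  Rabs (Series (fun k => t^k / INR (Factorial.fact k) * c k) - c 0%nat - t * c 1%nat) <= (t*L)^2 * exp (t*L).
Proof.
intros Ht HL Hc.
set (f := fun k => t^k / INR (Factorial.fact k) * c k).
set (g := fun k => (t*L)^k / INR (Factorial.fact k)).
assert (Hf : forall k, Rabs (f k) <= g k).
{ intros k. unfold f, g. rewrite Rabs_mult. unfold Rdiv. rewrite Rabs_mult, Rabs_inv.
  rewrite (Rabs_right (INR _)) by (apply Rle_ge, pos_INR). rewrite <- RPow_abs, (Rabs_right t) by lra.
  rewrite Rpow_mult_distr.
  assert (0 < / INR (Factorial.fact k)) by (apply Rinv_0_lt_compat, lt_0_INR, Factorial.lt_O_fact).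
  assert (0 <= t^k) by (apply pow_le; lra).
  assert (t^k * / INR (Factorial.fact k) * Rabs (c k) <= t^k * / INR (Factorial.fact k) * L^k)
    by (apply Rmult_le_compat_l; [nra| apply Hc]). lra. }
assert (Hg : is_series g (exp (t*L))) by apply exp_series.
assert (Hexf : ex_series f).
{ apply ex_series_Rabs. apply (ex_series_le (K:=R_AbsRing) (V:=R_CompleteNormedModule) _ g). intros k. unfold norm; simpl. unfold abs; simpl.
  rewrite Rabs_Rabsolu. apply Hf. eexists; exact Hg. }
assert (Hexf1 : ex_series (fun k => f (S k))) by (apply (ex_series_incr_1 f); exact Hexf).
rewrite (Series_incr_1 f Hexf), (Series_incr_1 _ Hexf1).
assert (E0 : f 0%nat = c 0%nat) by (unfold f; simpl; field).
assert (E1 : f 1%nat = t * c 1%nat) by (unfold f; simpl; field).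
rewrite E0, E1.
replace (c 0%nat + (t * c 1%nat + Series (fun k : nat => f (S (S k)))) - c 0%nat - t * c 1%nat)
  with (Series (fun k : nat => f (S (S k)))) by ring.
set (h := fun k => (t*L)^2 * g k).
assert (Hh : is_series h ((t*L)^2 * exp (t*L))) by (apply (is_series_scal_l (V:=R_NormedModule)); exact Hg).
assert (Hfh : forall k, Rabs (f (S (S k))) <= h k).
{ intros k. eapply Rle_trans. apply Hf. unfold g, h.
  replace ((t * L) ^ S (S k)) with ((t*L)^2 * (t*L)^k) by (simpl; ring).
  assert (0 <= (t*L)^2) by (apply pow_le; nra). assert (0 <= (t*L)^k) by (apply pow_le; nra).
  unfold Rdiv. rewrite Rmult_assoc. apply Rmult_le_compat_l. lra. apply Rmult_le_compat_l. lra. apply fact_ratio. }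
eapply Rle_trans. apply Series_Rabs.
{ apply (ex_series_le (K:=R_AbsRing) (V:=R_CompleteNormedModule) _ h). intros k. unfold norm; simpl. unfold abs; simpl. rewrite Rabs_Rabsolu. apply Hfh. eexists; exact Hh. }
rewrite <- (is_series_unique _ _ Hh). apply Series_le. intros k; split. apply Rabs_pos. apply Hfh. eexists; exact Hh.
Qed.
Lemma div_le a b c : 0 < b -> a <= c * b -> a / b <= c.
Proof. intros Hb H. apply Rmult_le_reg_r with b. exact Hb.
replace (a / b * b) with a by (field; lra). exact H. Qed.

Lemma exp_mono x y : x <= y -> exp x <= exp y.
Proof. intros H. destruct (Req_dec x y). subst; lra. apply Rlt_le, exp_increasing; lra. Qed.

Lemma exp_inv t : exp t * exp (-t) = 1.
Proof. rewrite <- exp_plus. replace (t + -t) with 0 by ring. apply exp_0. Qed.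

Lemma b_facts t : 0 <= t -> 0 < exp(-2*t) <= 1 /\ 1 - 2*t <= exp(-2*t) <= 1 - 2*t + 4*t^2.
Proof.
intros Ht. assert (H1 := exp_pos (-2*t)). split. split; [lra|].
rewrite <- exp_0. apply exp_mono. lra.
split. generalize (exp_ineq1_le (-2*t)); lra.
assert (H2 := exp_ineq1_le (2*t)). assert (H3 := exp_inv (2*t)).
replace (-(2*t)) with (-2*t) in H3 by ring.
assert (H4: exp (-2*t) * (1 + 2*t) <= 1) by nra.
assert (H5: 1 <= (1+2*t)*(1 - 2*t + 4*t^2)) by nra.
nra.
Qed.

Lemma sqrt_b t : sqrt (exp (-2*t)) = exp (-t).
Proof.
replace (exp (-2*t)) with (exp (-t) ^ 2). apply sqrt_pow2. apply Rlt_le, exp_pos.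
simpl. rewrite Rmult_1_r, <- exp_plus. f_equal; ring.
Qed.

Lemma et_bound t : 0 <= t -> exp t - 1 <= t * exp t.
Proof.
intros Ht. assert (H := exp_ineq1_le (-t)). assert (H2 := exp_inv t). assert (H3 := exp_pos t). nra.
Qed.

Definition sf t u := u^2 + (1-u^2)*exp(-2*t).

Lemma sf_bounds t u : 0 <= t -> exp(-2*t) <= sf t u <= 1 + u^2*(1-exp(-2*t)).
Proof. intros Ht. destruct (b_facts t Ht) as [[H1 H2] _]. unfold sf. split; nra. Qed.

Lemma alg1 a W : 0 <= a -> 0 <= W ->
  (1 + W * a) * (1 + W * a) - (1 - a) <= a * (1 + 3 * W) * ((1 + W * a) * (1 + W * a)).
Proof. intros Ha HW.
assert (0 <= W*a) by nra. assert (0 <= W*a*a) by nra. assert (0 <= W*W*a*a*a) by nra.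
assert (0 <= W*W*a*a) by nra. assert (0 <= W*W*W*a*a*a) by nra. nra. Qed.

Lemma lam_bounds t0 t w : 0 < t < t0 ->
  let l := exp(-2*t)/(sf t w * sqrt (sf t w)) in
  0 <= l <= exp t0 /\ l - 1 <= t * exp t0 /\ 1 - l <= 6 * t * (1 + w^2).
Proof.
intros Ht l.
destruct (b_facts t ltac:(lra)) as [[H1 H2] [H3 H4]].
destruct (sf_bounds t w ltac:(lra)) as [S1 S2].
set (b := exp (-2*t)) in *. set (s := sf t w) in *.
assert (Hsq : exp (-t) <= sqrt s). { rewrite <- sqrt_b. apply sqrt_le_1_alt. exact S1. }
assert (Hem := exp_pos (-t)). assert (Hinv := exp_inv t). assert (Hep := exp_pos t).
assert (Het : exp t <= exp t0) by (apply exp_mono; lra).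
assert (Hss : 0 < s * sqrt s) by (apply Rmult_lt_0_compat; lra).
assert (Lup : l <= exp t).
{ unfold l. apply div_le. exact Hss.
  assert (b * exp (-t) <= s * sqrt s) by (apply Rmult_le_compat; lra). nra. }
assert (Lpos : 0 <= l) by (unfold l; apply Rle_mult_inv_pos; lra).
split. lra. split.
{ assert (E1 := et_bound t ltac:(lra)). assert (t * exp t <= t * exp t0) by (apply Rmult_le_compat_l; lra). lra. }
set (q := 1 + w^2 * (1 - b)).
assert (Hq1 : 1 <= q) by (unfold q; nra). assert (Sq : s <= q) by (unfold q; lra).
assert (Hsqq : sqrt s <= q).
{ apply Rle_trans with (sqrt q). apply sqrt_le_1_alt. unfold q; lra.
  assert (1 <= sqrt q) by (rewrite <- sqrt_1; apply sqrt_le_1_alt; lra).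
  assert (sqrt q * sqrt q = q) by (apply sqrt_sqrt; lra). nra. }
assert (Hsq0 : 0 <= sqrt s) by apply sqrt_pos.
assert (Hss2 : s * sqrt s <= q * q) by (apply Rmult_le_compat; lra).
assert (Llow : b / (q*q) <= l).
{ unfold l. unfold Rdiv. apply Rmult_le_compat_l. lra. apply Rinv_le_contravar; lra. }
assert (Halg : 1 - b/(q*q) <= (1-b) * (1 + 3*w^2)).
{ assert (Hqq : 0 < q*q) by nra.
  apply Rle_trans with ((q*q - b)/(q*q)). right; field; lra.
  apply div_le. exact Hqq. unfold q.
  assert (Ha : 0 <= 1 - b) by lra. assert (HW : 0 <= w^2) by nra.
  generalize (alg1 _ _ Ha HW). intros HH. replace (1 - (1 - b)) with b in HH by ring. lra. }
assert (0 <= w^2) by nra. nra.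
Qed.
Lemma entry_bound (c : nat -> R) t t0 L : 0 < t < t0 -> 0 <= L -> (forall k, Rabs (c k) <= L^k) ->
  Rabs ((Series (fun k => t^k / INR (Factorial.fact k) * c k) - c 0%nat)/t - c 1%nat) <= (L^2 * exp (t0*L)) * t.
Proof.
intros Ht HL Hc. assert (H := series_rem c t L ltac:(lra) HL Hc).
set (S := Series (fun k => t^k / INR (Factorial.fact k) * c k)) in *. clearbody S.
replace ((S - c 0%nat)/t - c 1%nat) with ((S - c 0%nat - t * c 1%nat) / t) by (field; lra).
set (X := S - c 0%nat - t * c 1%nat) in *. clearbody X.
unfold Rdiv. rewrite Rabs_mult, Rabs_inv, (Rabs_right t) by lra.
assert (exp (t*L) <= exp (t0*L)) by (apply exp_mono; nra).
assert (0 < exp (t*L)) by apply exp_pos.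
apply Rmult_le_reg_r with t. lra.
replace (Rabs X * / t * t) with (Rabs X) by (field; lra).
eapply Rle_trans. exact H. replace ((t*L)^2) with (t*t*L^2) by ring.
assert (0 <= L^2) by nra. assert (0 <= t * t * L^2) by (apply Rmult_le_pos; nra).
apply Rle_trans with (t*t*L^2 * exp (t0*L)). apply Rmult_le_compat_l; lra. right; ring.
Qed.

Definition dd11 g1 g2 t := (m11 (mexp t (Bmat g1 g2)) - 1) / t.
Definition dd12 g1 g2 t := (m12 (mexp t (Bmat g1 g2))) / t.
Definition dd21 g1 g2 t := (m21 (mexp t (Bmat g1 g2))) / t.
Definition dd22 g1 g2 t := (m22 (mexp t (Bmat g1 g2)) - 1) / t.

Lemma mexp_bounds g1 g2 t0 : exists K, 0 < K /\ forall t, 0 < t < t0 ->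
  Rabs (dd11 g1 g2 t - 0) <= K * t /\ Rabs (dd12 g1 g2 t - (-1)) <= K * t /\
  Rabs (dd21 g1 g2 t - g1) <= K * t /\ Rabs (dd22 g1 g2 t - (-g2)) <= K * t.
Proof.
set (M := 1 + Rabs g1 + Rabs g2).
assert (HM : 0 <= M) by (unfold M; generalize (Rabs_pos g1) (Rabs_pos g2); lra).
set (L := 2*M+1).
assert (HL : 0 <= L) by (unfold L; lra).
assert (HB := mpow_bound (Bmat g1 g2) M).
assert (Hg1 := Rabs_pos g1). assert (Hg2 := Rabs_pos g2).
simpl in HB. rewrite ?Rabs_R0, ?Rabs_Ropp, ?Rabs_R1 in HB. replace (Rabs (-1)) with 1 in HB by (rewrite Rabs_left; lra).
specialize (HB ltac:(unfold M; lra) ltac:(unfold M; lra) ltac:(unfold M; lra) ltac:(unfold M; lra)).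
fold L in HB.
exists (L^2 * exp (t0*L) + 1). split.
{ assert (0 < exp (t0*L)) by apply exp_pos. assert (0 <= L^2) by nra. nra. }
intros t Ht.
assert (W : forall X, Rabs X <= L^2 * exp (t0*L) * t -> Rabs X <= (L^2 * exp (t0*L) + 1) * t) by (intros; nra).
repeat split; apply W.
- assert (E := entry_bound (fun k => m11 (mpow (Bmat g1 g2) k)) t t0 L Ht HL (fun k => proj1 (HB k))).
  replace (dd11 g1 g2 t - 0) with ((Series (fun k => t^k / INR (Factorial.fact k) * m11 (mpow (Bmat g1 g2) k)) - m11 (mpow (Bmat g1 g2) 0))/t - m11 (mpow (Bmat g1 g2) 1)).
  exact E. unfold dd11, mexp. cbn [m11 m12 m21 m22 mpow mmul mid Bmat]. ring.
- assert (E := entry_bound (fun k => m12 (mpow (Bmat g1 g2) k)) t t0 L Ht HL (fun k => proj1 (proj2 (HB k)))).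
  replace (dd12 g1 g2 t - (-1)) with ((Series (fun k => t^k / INR (Factorial.fact k) * m12 (mpow (Bmat g1 g2) k)) - m12 (mpow (Bmat g1 g2) 0))/t - m12 (mpow (Bmat g1 g2) 1)).
  exact E. unfold dd12, mexp. cbn [m11 m12 m21 m22 mpow mmul mid Bmat]. field. lra.
- assert (E := entry_bound (fun k => m21 (mpow (Bmat g1 g2) k)) t t0 L Ht HL (fun k => proj1 (proj2 (proj2 (HB k))))).
  replace (dd21 g1 g2 t - g1) with ((Series (fun k => t^k / INR (Factorial.fact k) * m21 (mpow (Bmat g1 g2) k)) - m21 (mpow (Bmat g1 g2) 0))/t - m21 (mpow (Bmat g1 g2) 1)).
  exact E. unfold dd21, mexp. cbn [m11 m12 m21 m22 mpow mmul mid Bmat]. field. lra.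
- assert (E := entry_bound (fun k => m22 (mpow (Bmat g1 g2) k)) t t0 L Ht HL (fun k => proj2 (proj2 (proj2 (HB k))))).
  replace (dd22 g1 g2 t - (-g2)) with ((Series (fun k => t^k / INR (Factorial.fact k) * m22 (mpow (Bmat g1 g2) k)) - m22 (mpow (Bmat g1 g2) 0))/t - m22 (mpow (Bmat g1 g2) 1)).
  exact E. unfold dd22, mexp. cbn [m11 m12 m21 m22 mpow mmul mid Bmat]. field. lra.
Qed.
Lemma pw v : 0 <= v -> v * (v^2+1)^2 <= 4 * (1 + v ^ 5).
Proof. intros Hv. destruct (Rle_dec v 1).
- assert (v^2 <= 1) by nra. assert (v^3 <= 1) by nra. assert (0 <= v^5) by (apply pow_le; lra). nra.
- assert (v <= v^3) by nra. assert (v^3 <= v^5) by nra. nra.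
Qed.

Lemma h_bound t0 t u : 0 < t < t0 ->
  Rabs ((u / sqrt (sf t u) - u)/t - (u - u^3)) <= t * (16 + 16*exp t0) * (1 + Rabs u ^ 5).
Proof.
intros Ht.
destruct (b_facts t ltac:(lra)) as [[H1 H2] [H3 H4]].
destruct (sf_bounds t u ltac:(lra)) as [S1 S2].
assert (Hsq : exp (-t) <= sqrt (sf t u)). { rewrite <- sqrt_b. apply sqrt_le_1_alt. exact S1. }
assert (Hem := exp_pos (-t)). assert (Hinv := exp_inv t). assert (Hep := exp_pos t).
assert (Het : exp t <= exp t0) by (apply exp_mono; lra).
assert (Hr2 : sqrt (sf t u) * sqrt (sf t u) = 1 + (u^2-1)*(1 - exp (-2*t))).
{ rewrite sqrt_sqrt by lra. unfold sf. ring. }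
set (r := sqrt (sf t u)) in *. clearbody r.
set (a := 1 - exp(-2*t)) in *. assert (Ha : 0 <= a <= 2*t) by (unfold a; lra).
assert (Hta : Rabs (t - a/2) <= 2*t^2) by (apply Rabs_le; unfold a; split; nra).
clearbody a. assert (Hrp : 0 < r) by lra.
assert (Hir : / r <= exp t0).
{ apply Rle_trans with (exp t); [|exact Het].
  apply Rle_trans with (/ exp (-t)). apply Rinv_le_contravar; lra.
  right. rewrite exp_Ropp, Rinv_inv. reflexivity. }
remember ((r-1)^2 * (/2 + /r)) as Q eqn:HQd.
assert (HT : 1/r - 1 - t*(1-u^2) = Q + (u^2-1)*(t - a/2)).
{ replace ((u^2-1)*(t - a/2)) with ((u^2-1)*t - ((u^2-1)*a)/2) by field.
  replace ((u^2-1)*a) with (r*r - 1) by lra. rewrite HQd. field. lra. }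
assert (Hid : (u / r - u)/t - (u - u^3) = u / t * (1/r - 1 - t*(1-u^2))) by (field; lra).
rewrite Hid, HT.
assert (HU : Rabs (u^2-1) <= u^2+1) by (apply Rabs_le; nra).
assert (HQ0 : 0 <= Q). { rewrite HQd. assert (0 < /r) by (apply Rinv_0_lt_compat; lra). apply Rmult_le_pos. apply pow2_ge_0. lra. }
assert (HQ : Q <= (r*r-1)^2 * (/2 + exp t0)).
{ rewrite HQd. assert (0 < /r) by (apply Rinv_0_lt_compat; lra).
  assert ((r-1)^2 <= (r*r-1)^2) by (replace ((r*r-1)^2) with ((r-1)^2*(r+1)^2) by ring; nra).
  apply Rmult_le_compat; nra. }
assert (Hr1 : (r*r-1)^2 <= 4*t^2*(u^2+1)^2).
{ rewrite Hr2. replace ((1 + (u ^ 2 - 1) * a - 1) ^ 2) with ((u^2-1)^2 * a^2) by ring.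
  replace (4 * t ^ 2 * (u ^ 2 + 1) ^ 2) with ((u^2+1)^2 * (2*t)^2) by ring.
  assert ((u^2-1)^2 <= (u^2+1)^2) by nra. assert (a^2 <= (2*t)^2) by nra.
  apply Rmult_le_compat; [apply pow2_ge_0|apply pow2_ge_0|assumption|assumption]. }
assert (HB : Rabs (Q + (u^2-1)*(t - a/2)) <= t^2 * (u^2+1)^2 * (4 + 4*exp t0)).
{ eapply Rle_trans. apply Rabs_triang. rewrite Rabs_right by lra. rewrite Rabs_mult.
  assert (Rabs (u^2-1) * Rabs (t - a/2) <= (u^2+1) * (2*t^2)) by (apply Rmult_le_compat; try apply Rabs_pos; lra).
  assert (u^2+1 <= (u^2+1)^2) by nra.
  assert (0 <= exp t0) by (apply Rlt_le, exp_pos).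
  assert (Q <= 4*t^2*(u^2+1)^2 * (/2 + exp t0)) by (eapply Rle_trans; [exact HQ|]; apply Rmult_le_compat_r; lra).
  nra. }
rewrite Rabs_mult. unfold Rdiv. rewrite Rabs_mult, Rabs_inv, (Rabs_right t) by lra.
assert (Hw := pw (Rabs u) (Rabs_pos u)). rewrite pow2_abs in Hw.
assert (Hp: 0 <= Rabs u * / t) by (apply Rmult_le_pos; [apply Rabs_pos| apply Rlt_le, Rinv_0_lt_compat; lra]).
apply Rle_trans with (Rabs u * / t * (t ^ 2 * (u ^ 2 + 1) ^ 2 * (4 + 4 * exp t0))).
apply Rmult_le_compat_l; assumption.
replace (Rabs u * / t * (t ^ 2 * (u ^ 2 + 1) ^ 2 * (4 + 4 * exp t0))) with (t * (4 + 4*exp t0) * (Rabs u * (u^2+1)^2)) by (field; lra).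
assert (0 <= exp t0) by (apply Rlt_le, exp_pos).
replace (t * (16 + 16 * exp t0) * (1 + Rabs u ^ 5)) with (t * (4 + 4*exp t0) * (4 * (1 + Rabs u ^ 5))) by ring.
apply Rmult_le_compat_l. nra. exact Hw.
Qed.
Lemma pf_deriv t x : 0 < sf t x -> is_derive (fun u => u / sqrt (u^2 + (1-u^2)*exp(-2*t))) x (exp(-2*t)/(sf t x * sqrt (sf t x))).
Proof.
intros H. unfold sf in *.
assert (E: x * (x * 1) + (1 + - (x * (x * 1))) * exp (-2 * t) = x ^ 2 + (1 - x ^ 2) * exp (-2 * t)) by ring.
auto_derive; rewrite E.
- split; [lra|split;[|exact I]]. apply Rgt_not_eq, sqrt_lt_R0; lra.
- assert (rr := sqrt_sqrt _ (Rlt_le _ _ H)).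
  assert (rp := sqrt_lt_R0 _ H).
  set (S := x ^ 2 + (1 - x ^ 2) * exp (-2 * t)) in *.
  assert (Sd : S = x ^ 2 + (1 - x ^ 2) * exp (-2 * t)) by reflexivity.
  set (r := sqrt S) in *. clearbody r. clearbody S. set (b := exp (-2*t)) in *.
  rewrite <- rr.
  transitivity ((r*r - x^2*(1-b))/(r*r*r)). field. lra.
  replace (r*r - x^2*(1-b)) with b by nra. field. lra.
Qed.

Definition pf t u := u / sqrt (u^2 + (1-u^2)*exp(-2*t)).

Lemma sq_between a b c : Rmin a b <= c <= Rmax a b -> c^2 <= a^2 + b^2.
Proof.
intros H. destruct (Rle_dec a b).
- rewrite Rmin_left, Rmax_right in H by lra. destruct (Rle_dec 0 c); nra.
- rewrite Rmin_right, Rmax_left in H by lra. destruct (Rle_dec 0 c); nra.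
Qed.

Lemma pf_mvt t0 t u1 u2 : 0 < t < t0 -> exists l, 0 <= l <= exp t0 /\ l - 1 <= t * exp t0 /\
  Rabs (l - 1) <= t * (exp t0 + 6) * (1 + u1^2 + u2^2) /\ pf t u2 - pf t u1 = l * (u2 - u1).
Proof.
intros Ht.
assert (Hsf : forall c, 0 < sf t c).
{ intros c. destruct (sf_bounds t c ltac:(lra)). assert (0 < exp (-2*t)) by apply exp_pos. lra. }
destruct (MVT_gen (fun u => u / sqrt (u^2 + (1-u^2)*exp(-2*t))) u1 u2
   (fun c => exp(-2*t)/(sf t c * sqrt (sf t c)))) as [c [Hc E]].
- intros x _. apply pf_deriv, Hsf.
- intros x _. apply (proj2 (continuity_pt_filterlim _ _)). apply (ex_derive_continuous (fun u => u / sqrt (u^2 + (1-u^2)*exp(-2*t)))). eexists. apply pf_deriv, Hsf.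
- exists (exp(-2*t)/(sf t c * sqrt (sf t c))).
  destruct (lam_bounds t0 t c Ht) as [L1 [L2 L3]].
  assert (Hc2 := sq_between _ _ _ Hc).
  assert (0 <= exp t0) by (apply Rlt_le, exp_pos).
  split. exact L1. split. exact L2. split.
  + apply Rabs_le. split.
    * assert (6*t*(1+c^2) <= t * (exp t0 + 6) * (1 + u1 ^ 2 + u2 ^ 2)).
      { assert (0 <= c^2) by nra. assert (0<= u1^2) by nra. assert (0 <= u2^2) by nra.
        assert (0 <= t * exp t0 * (1 + u1 ^ 2 + u2 ^ 2)) by (apply Rmult_le_pos; nra).
        nra. }
      lra.
    * assert (t * exp t0 <= t * (exp t0 + 6) * (1 + u1 ^ 2 + u2 ^ 2)).
      { assert (0<= u1^2) by nra. assert (0 <= u2^2) by nra.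
        assert (0 <= t*(exp t0+6) * (u1^2 + u2^2)) by (apply Rmult_le_pos; nra). nra. }
      lra.
  + unfold pf. exact E.
Qed.


Lemma vn_pos x : 0 <= vnorm x. Proof. apply sqrt_pos. Qed.
Lemma vn_sq x : vnorm x ^ 2 = fst x ^ 2 + snd x ^ 2.
Proof. unfold vnorm, inner. simpl. rewrite Rmult_1_r, sqrt_sqrt by nra. ring. Qed.
Lemma vn_ge x : Rabs (fst x) <= vnorm x /\ Rabs (snd x) <= vnorm x.
Proof.
unfold vnorm, inner. split.
- rewrite <- sqrt_Rsqr_abs. apply sqrt_le_1_alt. unfold Rsqr. nra.
- rewrite <- sqrt_Rsqr_abs. apply sqrt_le_1_alt. unfold Rsqr. nra.
Qed.
Lemma vn_le x : vnorm x <= Rabs (fst x) + Rabs (snd x).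
Proof.
unfold vnorm, inner. rewrite <- (sqrt_Rsqr (Rabs (fst x) + Rabs (snd x))).
2: generalize (Rabs_pos (fst x)) (Rabs_pos (snd x)); lra.
apply sqrt_le_1_alt. unfold Rsqr.
assert (E1 : fst x * fst x = Rabs (fst x) * Rabs (fst x)) by (rewrite <- Rabs_mult, Rabs_right; nra).
assert (E2 : snd x * snd x = Rabs (snd x) * Rabs (snd x)) by (rewrite <- Rabs_mult, Rabs_right; nra).
rewrite E1, E2. generalize (Rabs_pos (fst x)) (Rabs_pos (snd x)); nra.
Qed.

Lemma psi_fst g1 g2 beta t x : 0 < t -> fst (psi_tau g1 g2 beta t x) =
  dd11 g1 g2 t * pf t (fst x) + dd12 g1 g2 t * (snd x + beta*t) + (pf t (fst x) - fst x)/t.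
Proof. intros Ht. destruct x as [u v]. unfold psi_tau, phi_tau, phiL, phiNL, mapply, vscal, vsub, dd11, dd12, pf. simpl. generalize (u / sqrt (u * (u * 1) + (1 - u * (u * 1)) * exp (-2 * t))); intros p. field. lra. Qed.
Lemma psi_snd g1 g2 beta t x : 0 < t -> snd (psi_tau g1 g2 beta t x) =
  dd21 g1 g2 t * pf t (fst x) + dd22 g1 g2 t * (snd x + beta*t) + beta.
Proof. intros Ht. destruct x as [u v]. unfold psi_tau, phi_tau, phiL, phiNL, mapply, vscal, vsub, dd21, dd22, pf. simpl. generalize (u / sqrt (u * (u * 1) + (1 - u * (u * 1)) * exp (-2 * t))); intros p. field. lra. Qed.


Lemma mulabs X y P : Rabs X <= P -> X * y <= P * Rabs y.
Proof. intros H. eapply Rle_trans. apply Rle_abs. rewrite Rabs_mult. apply Rmult_le_compat_r. apply Rabs_pos. exact H. Qed.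

Lemma quad A B Cc D E du dv P : Rabs A <= P -> Rabs B <= P -> Cc <= P -> Rabs D <= P -> Rabs E <= P ->
  A*du^2 + B*(du*dv) + Cc*du^2 + D*(du*dv) + E*dv^2 <= 5*P*(du^2+dv^2).
Proof.
intros HA HB HC HD HE.
assert (HP : 0 <= P) by (generalize (Rabs_pos A); lra).
assert (H1 := mulabs A (du^2) P HA). assert (H2 := mulabs B (du*dv) P HB).
assert (H4 := mulabs D (du*dv) P HD). assert (H5 := mulabs E (dv^2) P HE).
rewrite Rabs_right in H1, H5 by (apply Rle_ge, pow2_ge_0).
assert (Hab : Rabs (du*dv) <= (du^2+dv^2)/2).
{ rewrite Rabs_mult. assert (Rabs du ^2 = du^2) by apply pow2_abs. assert (Rabs dv ^2 = dv^2) by apply pow2_abs.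
  assert (0 <= (Rabs du - Rabs dv)^2) by apply pow2_ge_0. nra. }
assert (P * Rabs (du*dv) <= P * ((du^2+dv^2)/2)) by (apply Rmult_le_compat_l; lra).
assert (Cc * du^2 <= P * du^2) by (apply Rmult_le_compat_r; [apply pow2_ge_0|lra]).
assert (0 <= P*du^2) by (apply Rmult_le_pos; [lra|apply pow2_ge_0]).
assert (0 <= P*dv^2) by (apply Rmult_le_pos; [lra|apply pow2_ge_0]).
nra.
Qed.

Definition Dm g1 g2 t0 K := K*t0 + 1 + Rabs g1 + Rabs g2.

Lemma d_bounds g1 g2 t0 K t : 0 < t < t0 -> 0 < K ->
  Rabs (dd11 g1 g2 t - 0) <= K * t -> Rabs (dd12 g1 g2 t - (-1)) <= K * t ->
  Rabs (dd21 g1 g2 t - g1) <= K * t -> Rabs (dd22 g1 g2 t - (-g2)) <= K * t ->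
  Rabs (dd11 g1 g2 t) <= Dm g1 g2 t0 K /\ Rabs (dd12 g1 g2 t) <= Dm g1 g2 t0 K /\
  Rabs (dd21 g1 g2 t) <= Dm g1 g2 t0 K /\ Rabs (dd22 g1 g2 t) <= Dm g1 g2 t0 K.
Proof.
intros Ht HK H1 H2 H3 H4. unfold Dm.
assert (Kt : K * t <= K * t0) by (apply Rmult_le_compat_l; lra).
assert (G1 := Rabs_pos g1). assert (G2 := Rabs_pos g2).
assert (T : forall a b, Rabs (a - b) <= K*t -> Rabs a <= K*t + Rabs b).
{ intros a b H. replace a with ((a - b) + b) by ring. eapply Rle_trans. apply Rabs_triang. lra. }
apply T in H1, H2, H3, H4. rewrite Rabs_R0 in H1. replace (Rabs (-1)) with 1 in H2 by (rewrite Rabs_left; lra). rewrite Rabs_Ropp in H4.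
lra.
Qed.

Lemma claim1 g1 g2 beta t0 : 0 < t0 -> exists C, 0 < C /\ forall t, 0 < t < t0 -> forall x1 x2,
  inner (vsub x2 x1) (vsub (psi_tau g1 g2 beta t x2) (psi_tau g1 g2 beta t x1)) <= C * vnorm (vsub x2 x1) ^ 2.
Proof.
intros Ht0. destruct (mexp_bounds g1 g2 t0) as [K [HK HKb]].
set (D := Dm g1 g2 t0 K).
assert (HD : 0 <= D) by (unfold D, Dm; generalize (Rabs_pos g1) (Rabs_pos g2); nra).
assert (He := exp_pos t0).
set (P := D * exp t0 + D + exp t0).
exists (5*P+1). split. { unfold P. nra. }
intros t Ht [u1 v1] [u2 v2].
destruct (HKb t Ht) as [B1 [B2 [B3 B4]]].
destruct (d_bounds g1 g2 t0 K t Ht HK B1 B2 B3 B4) as [D1 [D2 [D3 D4]]]. fold D in D1, D2, D3, D4.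
destruct (pf_mvt t0 t u1 u2 Ht) as [l [Hl0 [Hl1 [Hl2 Hpl]]]].
rewrite vn_sq. unfold inner, vsub. cbn [fst snd].
rewrite !psi_fst, !psi_snd by lra. cbn [fst snd].
replace (pf t u2) with (pf t u1 + l * (u2 - u1)) by lra.
set (d11 := dd11 g1 g2 t) in *. set (d12 := dd12 g1 g2 t) in *.
set (d21 := dd21 g1 g2 t) in *. set (d22 := dd22 g1 g2 t) in *.
replace ((u2 - u1) * (d11 * (pf t u1 + l * (u2 - u1)) + d12 * (v2 + beta * t) + (pf t u1 + l * (u2 - u1) - u2) / t -
   (d11 * pf t u1 + d12 * (v1 + beta * t) + (pf t u1 - u1) / t)) +
   (v2 - v1) * (d21 * (pf t u1 + l * (u2 - u1)) + d22 * (v2 + beta * t) + beta -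
   (d21 * pf t u1 + d22 * (v1 + beta * t) + beta)))
 with ((d11*l)*(u2-u1)^2 + d12*((u2-u1)*(v2-v1)) + ((l-1)/t)*(u2-u1)^2 + (d21*l)*((u2-u1)*(v2-v1)) + d22*(v2-v1)^2)
 by (field; lra).
apply Rle_trans with (5*P*((u2-u1)^2+(v2-v1)^2)).
2: { assert (0 <= (u2-u1)^2+(v2-v1)^2) by (generalize (pow2_ge_0 (u2-u1)) (pow2_ge_0 (v2-v1)); lra). nra. }
assert (HlP : Rabs l <= exp t0) by (rewrite Rabs_right; lra).
assert (HDl : forall d, Rabs d <= D -> Rabs (d*l) <= P).
{ intros d Hd. rewrite Rabs_mult. assert (Rabs d * Rabs l <= D * exp t0) by (apply Rmult_le_compat; try apply Rabs_pos; lra).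
  unfold P. lra. }
apply quad.
- apply HDl, D1.
- unfold P. assert (0 <= D * exp t0) by nra. lra.
- assert ((l-1)/t <= exp t0). { apply div_le. lra. lra. } unfold P. assert (0 <= D * exp t0) by nra. lra.
- apply HDl, D3.
- unfold P. assert (0 <= D * exp t0) by nra. lra.
Qed.


Lemma term_bd X y Bx N : Rabs X <= Bx -> Rabs y <= N -> Rabs (X*y) <= Bx*N.
Proof. intros H1 H2. rewrite Rabs_mult. apply Rmult_le_compat; try apply Rabs_pos; assumption. Qed.

Lemma sq_cube n : 0 <= n -> n^2 <= 1 + n^3.
Proof. intros H. destruct (Rle_dec n 1). assert (0 <= n^3) by (apply pow_le; lra). nra. nra. Qed.

Lemma abs3 a b c : Rabs (a + b + c) <= Rabs a + Rabs b + Rabs c.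
Proof. eapply Rle_trans. apply Rabs_triang. generalize (Rabs_triang a b). lra. Qed.

Lemma claim2 g1 g2 beta t0 : 0 < t0 -> exists C, 0 < C /\ forall t, 0 < t < t0 -> forall x1 x2,
  vnorm (vsub (psi_tau g1 g2 beta t x2) (psi_tau g1 g2 beta t x1))
        <= C * (1 + vnorm x1 ^ 3 + vnorm x2 ^ 3) * vnorm (vsub x2 x1).
Proof.
intros Ht0. destruct (mexp_bounds g1 g2 t0) as [K [HK HKb]].
set (D := Dm g1 g2 t0 K).
assert (HD : 0 <= D) by (unfold D, Dm; generalize (Rabs_pos g1) (Rabs_pos g2); nra).
assert (He := exp_pos t0).
set (P := D * exp t0 + D + exp t0).
assert (HP : 0 <= P) by (unfold P; nra).
exists (4*P + 3*exp t0 + 18). split. { nra. }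
intros t Ht x1 x2.
assert (Hn1 := vn_ge x1). assert (Hn2 := vn_ge x2). assert (HN := vn_ge (vsub x2 x1)).
assert (P1 := vn_pos x1). assert (P2 := vn_pos x2). assert (PN := vn_pos (vsub x2 x1)).
set (n1 := vnorm x1) in *. set (n2 := vnorm x2) in *. set (N := vnorm (vsub x2 x1)) in *.
clearbody n1 n2 N.
destruct x1 as [u1 v1]. destruct x2 as [u2 v2]. unfold vsub in HN |- *. cbn [fst snd] in *.
destruct (HKb t Ht) as [B1 [B2 [B3 B4]]].
destruct (d_bounds g1 g2 t0 K t Ht HK B1 B2 B3 B4) as [D1 [D2 [D3 D4]]]. fold D in D1, D2, D3, D4.
destruct (pf_mvt t0 t u1 u2 Ht) as [l [Hl0 [Hl1 [Hl2 Hpl]]]].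
eapply Rle_trans. apply vn_le. cbn [fst snd].
rewrite !psi_fst, !psi_snd by lra. cbn [fst snd].
replace (pf t u2) with (pf t u1 + l * (u2 - u1)) by lra.
set (d11 := dd11 g1 g2 t) in *. set (d12 := dd12 g1 g2 t) in *.
set (d21 := dd21 g1 g2 t) in *. set (d22 := dd22 g1 g2 t) in *.
replace (d11 * (pf t u1 + l * (u2 - u1)) + d12 * (v2 + beta * t) + (pf t u1 + l * (u2 - u1) - u2) / t -
   (d11 * pf t u1 + d12 * (v1 + beta * t) + (pf t u1 - u1) / t))
 with ((d11*l)*(u2-u1) + d12*(v2-v1) + ((l-1)/t)*(u2-u1)) by (field; lra).
replace (d21 * (pf t u1 + l * (u2 - u1)) + d22 * (v2 + beta * t) + beta -
   (d21 * pf t u1 + d22 * (v1 + beta * t) + beta))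
 with ((d21*l)*(u2-u1) + d22*(v2-v1) + 0) by ring.
assert (HlP : Rabs l <= exp t0) by (rewrite Rabs_right; lra).
assert (HDl : forall d, Rabs d <= D -> Rabs (d*l) <= P).
{ intros d Hd. rewrite Rabs_mult. assert (Rabs d * Rabs l <= D * exp t0) by (apply Rmult_le_compat; try apply Rabs_pos; lra).
  unfold P. lra. }
assert (HDP : forall d, Rabs d <= D -> Rabs d <= P) by (intros; unfold P; nra).
destruct HN as [HN1 HN2].
remember (1 + n1^3 + n2^3) as Z eqn:HZd.
assert (Hu1 : u1^2 <= 1 + n1^3). { apply Rle_trans with (n1^2). rewrite <- pow2_abs. apply pow_incr. split; [apply Rabs_pos|lra]. apply sq_cube; lra. }
assert (Hu2 : u2^2 <= 1 + n2^3). { apply Rle_trans with (n2^2). rewrite <- pow2_abs. apply pow_incr. split; [apply Rabs_pos|lra]. apply sq_cube; lra. }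
assert (HZ1 : 1 <= Z) by (rewrite HZd; assert (0 <= n1^3) by (apply pow_le; lra); assert (0 <= n2^3) by (apply pow_le; lra); lra).
assert (Hlt : Rabs ((l-1)/t) <= (exp t0 + 6) * (3 * Z)).
{ unfold Rdiv. rewrite Rabs_mult, Rabs_inv, (Rabs_right t) by lra.
  apply div_le. lra. eapply Rle_trans. exact Hl2.
  assert (1 + u1^2 + u2^2 <= 3 * Z) by (rewrite HZd; lra).
  assert (0 <= exp t0 + 6) by lra.
  assert ((exp t0 + 6) * (1 + u1 ^ 2 + u2 ^ 2) <= (exp t0 + 6) * (3 * Z)) by (apply Rmult_le_compat_l; lra).
  nra. }
assert (T1 := abs3 (d11 * l * (u2 - u1)) (d12 * (v2 - v1)) ((l - 1) / t * (u2 - u1))).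
assert (T2 := abs3 (d21 * l * (u2 - u1)) (d22 * (v2 - v1)) 0). rewrite Rabs_R0 in T2.
assert (A1 := term_bd _ _ _ _ (HDl _ D1) HN1).
assert (A2 := term_bd _ _ _ _ (HDP _ D2) HN2).
assert (A3 := term_bd _ _ _ _ Hlt HN1).
assert (A4 := term_bd _ _ _ _ (HDl _ D3) HN1).
assert (A5 := term_bd _ _ _ _ (HDP _ D4) HN2).
assert (HPN : 4 * P * N <= 4 * P * Z * N) by (assert (0 <= P*N) by nra; nra).
assert (E : (4 * P + 3 * exp t0 + 18) * Z * N = 4*P*Z*N + (exp t0 + 6) * (3*Z) * N) by ring.
rewrite E. lra.
Qed.


Lemma n_le n : 0 <= n -> n <= 1 + n^5 /\ n^3 <= 1 + n^5 /\ 1 <= 1 + n^5.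
Proof. intros H. assert (0 <= n^5) by (apply pow_le; lra). destruct (Rle_dec n 1).
- assert (n^2 <= 1) by nra. assert (n^3 <= 1) by nra. lra.
- assert (n <= n^3) by nra. assert (n^3 <= n^5) by nra. lra.
Qed.

Lemma pf0 t : pf t 0 = 0.
Proof. unfold pf. unfold Rdiv. apply Rmult_0_l. Qed.

Lemma claim3 g1 g2 beta t0 : 0 < t0 -> exists C, 0 < C /\ forall t, 0 < t < t0 -> forall x,
  vnorm (vsub (psi_tau g1 g2 beta t x) (Ffield g1 g2 beta x)) <= C * t * (1 + vnorm x ^ 5).
Proof.
intros Ht0. destruct (mexp_bounds g1 g2 t0) as [K [HK HKb]].
assert (He := exp_pos t0).
assert (Gb := Rabs_pos beta). assert (G1 := Rabs_pos g1). assert (G2 := Rabs_pos g2).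
set (c1 := K * exp t0). set (c2 := K * (1 + Rabs beta * t0)). set (c3 := Rabs beta).
set (c4 := 16 + 16 * exp t0).
set (c5 := Rabs g1 * (exp t0 + 6) * 2). set (c6 := Rabs g2 * Rabs beta).
assert (Hc : 0 <= c1 /\ 0 <= c2 /\ 0 <= c3 /\ 0 <= c4 /\ 0 <= c5 /\ 0 <= c6).
{ unfold c1, c2, c3, c4, c5, c6. repeat split; try apply Rmult_le_pos; nra. }
destruct Hc as [Hc1 [Hc2 [Hc3 [Hc4 [Hc5 Hc6]]]]].
exists (c1 + c2 + c3 + c4 + c1 + c5 + c2 + c6 + 1). split. lra.
intros t Ht x.
assert (Hn := vn_ge x). assert (Pn := vn_pos x).
set (n := vnorm x) in *. clearbody n.
destruct (n_le n Pn) as [Z1 [Z3 Z0]].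
remember (1 + n^5) as Z eqn:HZd.
destruct x as [u v]. cbn [fst snd] in Hn. destruct Hn as [Hu Hv].
destruct (HKb t Ht) as [B1 [B2 [B3 B4]]].
destruct (pf_mvt t0 t 0 u Ht) as [l [Hl0 [Hl1 [Hl2 Hpl]]]].
rewrite pf0 in Hpl. replace (u - 0) with u in Hpl by ring. replace (0^2) with 0 in Hl2 by ring.
assert (Hh := h_bound t0 t u Ht).
eapply Rle_trans. apply vn_le. unfold vsub, Ffield. cbn [fst snd].
rewrite psi_fst, psi_snd by lra. cbn [fst snd].
assert (Ep : pf t u = l * u) by lra.
assert (Eh : (pf t u - u) / t - (u - u^3) = (u / sqrt (sf t u) - u) / t - (u - u ^ 3)) by reflexivity.
set (h := (pf t u - u) / t - (u - u^3)) in *.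
set (d11 := dd11 g1 g2 t) in *. set (d12 := dd12 g1 g2 t) in *.
set (d21 := dd21 g1 g2 t) in *. set (d22 := dd22 g1 g2 t) in *.
replace (d11 * pf t u + d12 * (v + beta * t) + (pf t u - u) / t - (u - u ^ 3 - v))
  with ((d11 - 0) * (l*u) + (d12 - -1) * (v + beta*t) + (-(beta*t) + h)) by (unfold h; rewrite Ep; ring).
replace (d21 * pf t u + d22 * (v + beta * t) + beta - (g1 * u - g2 * v + beta))
  with ((d21 - g1) * (l*u) + (d22 - - g2) * (v + beta*t) + (g1 * (l - 1) * u - g2 * (beta * t))) by (rewrite Ep; ring).
rewrite <- Eh in Hh. clear Eh.
assert (Hlu : Rabs (l*u) <= exp t0 * n).
{ rewrite Rabs_mult, (Rabs_right l) by lra. apply Rmult_le_compat; try lra. apply Rabs_pos. }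
assert (HV : Rabs (v + beta*t) <= n + Rabs beta * t0).
{ eapply Rle_trans. apply Rabs_triang. rewrite Rabs_mult, (Rabs_right t) by lra.
  assert (Rabs beta * t <= Rabs beta * t0) by (apply Rmult_le_compat_l; lra). lra. }
assert (Hn5 : Rabs u ^ 5 <= n^5) by (apply pow_incr; split; [apply Rabs_pos|lra]).
assert (HZ : 0 <= Z) by lra.
assert (Ht' : 0 <= t) by lra.
assert (P1 : Rabs ((d11 - 0) * (l*u)) <= t * Z * c1).
{ eapply Rle_trans. apply (term_bd _ _ _ _ B1 Hlu). unfold c1.
  replace (K * t * (exp t0 * n)) with ((K*t*exp t0) * n) by ring.
  replace (t * Z * (K * exp t0)) with ((K*t*exp t0) * Z) by ring.
  apply Rmult_le_compat_l. assert (0 <= K*t) by nra. nra. lra. }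
assert (P2 : Rabs ((d12 - -1) * (v + beta*t)) <= t * Z * c2).
{ eapply Rle_trans. apply (term_bd _ _ _ _ B2 HV). unfold c2.
  assert (n + Rabs beta * t0 <= Z * (1 + Rabs beta * t0)) by (assert (0 <= Rabs beta * t0) by nra; nra).
  assert (0 <= K*t) by nra.
  apply Rle_trans with (K*t*(Z * (1 + Rabs beta * t0))). apply Rmult_le_compat_l; lra. right; ring. }
assert (P3 : Rabs (-(beta*t) + h) <= t * Z * c3 + t * Z * c4).
{ eapply Rle_trans. apply Rabs_triang. rewrite Rabs_Ropp, Rabs_mult, (Rabs_right t) by lra.
  unfold c3, c4.
  assert (Rabs beta * t <= t * Z * Rabs beta) by (assert (0 <= Rabs beta * t) by nra; nra).
  assert (t * (16 + 16 * exp t0) * (1 + Rabs u ^ 5) <= t * Z * (16 + 16 * exp t0)).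
  { replace (t * Z * (16 + 16 * exp t0)) with (t * (16 + 16 * exp t0) * Z) by ring.
    apply Rmult_le_compat_l. nra. lra. }
  lra. }
assert (Q1 : Rabs ((d21 - g1) * (l*u)) <= t * Z * c1).
{ eapply Rle_trans. apply (term_bd _ _ _ _ B3 Hlu). unfold c1.
  replace (K * t * (exp t0 * n)) with ((K*t*exp t0) * n) by ring.
  replace (t * Z * (K * exp t0)) with ((K*t*exp t0) * Z) by ring.
  apply Rmult_le_compat_l. assert (0 <= K*t) by nra. nra. lra. }
assert (Q2 : Rabs ((d22 - - g2) * (v + beta*t)) <= t * Z * c2).
{ eapply Rle_trans. apply (term_bd _ _ _ _ B4 HV). unfold c2.
  assert (n + Rabs beta * t0 <= Z * (1 + Rabs beta * t0)) by (assert (0 <= Rabs beta * t0) by nra; nra).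
  assert (0 <= K*t) by nra.
  apply Rle_trans with (K*t*(Z * (1 + Rabs beta * t0))). apply Rmult_le_compat_l; lra. right; ring. }
assert (Q3 : Rabs (g1 * (l - 1) * u - g2 * (beta * t)) <= t * Z * c5 + t * Z * c6).
{ unfold Rminus at 1. eapply Rle_trans. apply Rabs_triang. rewrite Rabs_Ropp, !Rabs_mult, (Rabs_right t) by lra.
  unfold c5, c6.
  assert (Hu3 : (1 + u^2) * Rabs u <= 2 * Z).
  { assert (Rabs u ^ 2 = u^2) by apply pow2_abs.
    assert (Rabs u ^3 <= n^3) by (apply pow_incr; split; [apply Rabs_pos|lra]).
    assert ((1 + u^2) * Rabs u = Rabs u + Rabs u ^3) by (rewrite <- H; ring). lra. }
  assert (Rabs (l - 1) * Rabs u <= t * (exp t0 + 6) * (2 * Z)).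
  { apply Rle_trans with (t * (exp t0 + 6) * (1 + 0 + u ^ 2) * Rabs u).
    apply Rmult_le_compat_r. apply Rabs_pos. exact Hl2.
    replace (t * (exp t0 + 6) * (1 + 0 + u ^ 2) * Rabs u) with (t * (exp t0 + 6) * ((1 + u^2) * Rabs u)) by ring.
    apply Rmult_le_compat_l. nra. exact Hu3. }
  assert (Rabs g1 * (Rabs (l - 1) * Rabs u) <= Rabs g1 * (t * (exp t0 + 6) * (2 * Z))) by (apply Rmult_le_compat_l; lra).
  assert (Rabs g2 * (Rabs beta * t) <= t * Z * (Rabs g2 * Rabs beta)).
  { replace (Rabs g2 * (Rabs beta * t)) with ((Rabs g2 * Rabs beta) * t * 1) by ring.
    replace (t * Z * (Rabs g2 * Rabs beta)) with ((Rabs g2 * Rabs beta) * t * Z) by ring.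
    apply Rmult_le_compat_l. apply Rmult_le_pos; [apply Rmult_le_pos|]; lra. lra. }
  replace (Rabs g1 * Rabs (l - 1) * Rabs u) with (Rabs g1 * (Rabs (l - 1) * Rabs u)) by ring.
  replace (t * Z * (Rabs g1 * (exp t0 + 6) * 2)) with (Rabs g1 * (t * (exp t0 + 6) * (2 * Z))) by ring.
  lra. }
assert (T1 := abs3 ((d11 - 0) * (l * u)) ((d12 - -1) * (v + beta * t)) (- (beta * t) + h)).
assert (T2 := abs3 ((d21 - g1) * (l * u)) ((d22 - - g2) * (v + beta * t)) (g1 * (l - 1) * u - g2 * (beta * t))).
replace ((c1 + c2 + c3 + c4 + c1 + c5 + c2 + c6 + 1) * t * Z)
  with (t*Z*c1 + t*Z*c2 + t*Z*c3 + t*Z*c4 + t*Z*c1 + t*Z*c5 + t*Z*c2 + t*Z*c6 + t*Z) by ring.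
assert (0 <= t * Z) by nra.
lra.
Qed.


Theorem mainTheorem4 (g1 g2 beta tau0 : R) (Htau0 : 0 < tau0) :
  (exists C : R, 0 < C /\
    forall tau : R, 0 < tau < tau0 ->
    forall x1 x2 x : vec,
      inner (vsub x2 x1) (vsub (psi_tau g1 g2 beta tau x2) (psi_tau g1 g2 beta tau x1))
        <= C * vnorm (vsub x2 x1) ^ 2
      /\ vnorm (vsub (psi_tau g1 g2 beta tau x2) (psi_tau g1 g2 beta tau x1))
        <= C * (1 + vnorm x1 ^ 3 + vnorm x2 ^ 3) * vnorm (vsub x2 x1)
      /\ vnorm (vsub (psi_tau g1 g2 beta tau x) (Ffield g1 g2 beta x))
        <= C * tau * (1 + vnorm x ^ 5))
  /\ (exists M : R, forall tau : R, 0 < tau < tau0 ->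
        vnorm (psi_tau g1 g2 beta tau (0, 0)) <= M).
Proof.
destruct (claim1 g1 g2 beta tau0 Htau0) as [C1 [HC1 H1]].
destruct (claim2 g1 g2 beta tau0 Htau0) as [C2 [HC2 H2]].
destruct (claim3 g1 g2 beta tau0 Htau0) as [C3 [HC3 H3]].
split.
- exists (C1 + C2 + C3). split. lra. intros t Ht x1 x2 x.
  assert (N1 := vn_pos x1). assert (N2 := vn_pos x2). assert (N := vn_pos x). assert (ND := vn_pos (vsub x2 x1)).
  split; [|split].
  + eapply Rle_trans. apply H1; exact Ht. apply Rmult_le_compat_r. apply pow2_ge_0. lra.
  + eapply Rle_trans. apply H2; exact Ht.
    assert (0 <= (1 + vnorm x1 ^ 3 + vnorm x2 ^ 3) * vnorm (vsub x2 x1)).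
    { apply Rmult_le_pos; [|lra]. assert (0 <= vnorm x1 ^3) by (apply pow_le; lra). assert (0 <= vnorm x2 ^3) by (apply pow_le; lra). lra. }
    rewrite !Rmult_assoc. apply Rmult_le_compat_r. exact H. lra.
  + eapply Rle_trans. apply H3; exact Ht.
    assert (0 <= t * (1 + vnorm x ^ 5)).
    { apply Rmult_le_pos; [lra|]. assert (0 <= vnorm x ^5) by (apply pow_le; lra). lra. }
    rewrite !Rmult_assoc. apply Rmult_le_compat_r. exact H. lra.
- exists (2 * C3 * tau0 + Rabs beta). intros t Ht.
  assert (Hd := H3 t Ht (0,0)).
  assert (E0 : vnorm (0,0) = 0) by (unfold vnorm, inner; simpl; replace (0*0+0*0) with 0 by ring; apply sqrt_0).
  rewrite E0 in Hd. replace (C3 * t * (1 + 0^5)) with (C3 * t) in Hd by ring.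
  assert (C3 * t <= C3 * tau0) by (apply Rmult_le_compat_l; lra).
  destruct (vn_ge (vsub (psi_tau g1 g2 beta t (0, 0)) (Ffield g1 g2 beta (0, 0)))) as [A1 A2].
  remember (vnorm (vsub (psi_tau g1 g2 beta t (0, 0)) (Ffield g1 g2 beta (0, 0)))) as V eqn:HV. clear HV.
  unfold vsub, Ffield in A1, A2. cbn [fst snd] in A1, A2.
  eapply Rle_trans. apply vn_le.
  set (p1 := fst (psi_tau g1 g2 beta t (0, 0))) in *.
  set (p2 := snd (psi_tau g1 g2 beta t (0, 0))) in *.
  replace (0 - 0^3 - 0) with 0 in A1 by ring. replace (p1 - 0) with p1 in A1 by ring.
  replace (g1 * 0 - g2 * 0 + beta) with beta in A2 by ring.
  assert (Rabs p2 <= Rabs (p2 - beta) + Rabs beta).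
  { replace p2 with ((p2 - beta) + beta) at 1 by ring. apply Rabs_triang. }
  clearbody p1 p2. lra.
Qed.
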